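(* Let $\mathbb{K}$ be a field, $\theta=(\{X_t\}_{t\in G},\{h_t\}_{t\in G})$ a free partial action of a group $G$ on a set $X$, $R=\{(x,h_t(x)): t\in G,\ x\in X_{t^{-1}}\}$, and $\mathcal{F}_0(R)$ the algebra of finitely supported functions $R\to\mathbb{K}$ with pointwise linear operations and product $(f*g)(x,h_t(x))=\sum_{s\in G,\ x\in X_{s^{-1}}} f(x,h_s(x))\,g(h_s(x),h_t(x))$. If $I$ is a (two-sided) ideal of $\mathcal{F}_0(R)$, then there exists an $R$-invariant subset $Z\subseteq X$ such that $I=\mathcal{F}_0((Z\times Z)\cap R)$, the set of $f\in\mathcal{F}_0(R)$ vanishing outside $(Z\times Z)\cap R$.
   Context: A partial action of $G$ on a set $X$: subsets $X_t$, bijections $h_t:X_{t^{-1}}\to X_t$, $X_e=X$, $h_e=\mathrm{id}$, $h_t(X_{t^{-1}}\cap X_s)=X_t\cap X_{ts}$, $h_th_s=h_{ts}$ on $X_{s^{-1}}\cap X_{s^{-1}t^{-1}}$; free means $h_t(x)=x$ implies $t=e$. A subset $Z\subseteq X$ is $R$-invariant if whenever $(z,x)\in R$ with $z\in Z$, then $x\in Z$. *)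

(* Defs.v *)
From HB Require Import structures.
From mathcomp Require Import all_boot all_algebra.
From mathcomp Require Import boolp classical_sets cardinality fsbigop.
Set Implicit Arguments. Unset Strict Implicit. Unset Printing Implicit Defensive.
Import GRing.Theory.
Local Open Scope classical_set_scope.
Local Open Scope ring_scope.

Record is_group (G : Type) (mul : G -> G -> G) (e : G) (inv : G -> G) : Prop := {
  grp_assoc : forall a b c, mul a (mul b c) = mul (mul a b) c;
  grp_mul1 : forall a, mul e a = a;
  grp_mulg1 : forall a, mul a e = a;
  grp_mulV : forall a, mul (inv a) a = e;
  grp_mulgV : forall a, mul a (inv a) = e }.

(* D t is the subset X_t; h t is
   a function X -> X whose restriction to X_{t^-1} is the bijection
   h_t : X_{t^-1} -> X_t (values outside X_{t^-1} are irrelevant). *)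
Record is_partial_action (G : Type) (mul : G -> G -> G) (e : G) (inv : G -> G)
    (X : Type) (D : G -> set X) (h : G -> X -> X) : Prop := {
  pa_maps : forall t x, D (inv t) x -> D t (h t x);
  pa_inj : forall t x y, D (inv t) x -> D (inv t) y -> h t x = h t y -> x = y;
  pa_surj : forall t y, D t y -> exists2 x, D (inv t) x & h t x = y;
  pa_De : forall x, D e x;
  pa_he : forall x, h e x = x;
  pa_image : forall t s y,
      (D t y /\ D (mul t s) y) <->
      (exists x, [/\ D (inv t) x, D s x & h t x = y]);
  pa_comp : forall t s x, D (inv s) x -> D (mul (inv s) (inv t)) x ->
      h t (h s x) = h (mul t s) x }.

Definition pa_free (G : Type) (e : G) (inv : G -> G)
    (X : Type) (D : G -> set X) (h : G -> X -> X) : Prop :=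
  forall t x, D (inv t) x -> h t x = x -> t = e.

Definition orbrel (G : Type) (inv : G -> G) (X : Type)
    (D : G -> set X) (h : G -> X -> X) (x y : X) : Prop :=
  exists2 t, D (inv t) x & h t x = y.

(* A function R -> K is represented as f : X -> X -> K vanishing off R.
   F_0(R): finitely supported functions on R. *)
Definition F0 (K : fieldType) (X : Type) (R : X -> X -> Prop)
    (f : X -> X -> K) : Prop :=
  (forall x y, f x y != 0 -> R x y) /\
  finite_set [set p : X * X | f p.1 p.2 != 0].

Definition gsum (K : fieldType) (I : Type) (A : set I) (F : I -> K) : K :=
  \sum_(i \in (A : set {classic I})) F i.

Definition conv (K : fieldType) (G : Type) (inv : G -> G) (X : Type)
    (D : G -> set X) (h : G -> X -> X) (f g : X -> X -> K) : X -> X -> K :=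
  fun x z =>
    if pselect (orbrel inv D h x z) then
      gsum [set s : G | D (inv s) x] (fun s => f x (h s x) * g (h s x) z)
    else 0.

Definition is_ideal (K : fieldType) (G : Type) (inv : G -> G) (X : Type)
    (D : G -> set X) (h : G -> X -> X) (I : set (X -> X -> K)) : Prop :=
  [/\ forall f, I f -> F0 (orbrel inv D h) f,
      I (fun _ _ => 0),
      forall f g, I f -> I g -> I (fun x y => f x y + g x y),
      forall f, I f -> I (fun x y => - f x y) &
      forall f g, F0 (orbrel inv D h) f -> I g ->
        I (conv inv D h f g) /\ I (conv inv D h g f)].

Definition R_invariant (X : Type) (R : X -> X -> Prop) (Z : set X) : Prop :=
  forall z x, Z z -> R z x -> Z x.

(* Main.v *)
Require Import Defs.
From HB Require Import structures.
From mathcomp Require Import all_boot all_algebra.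
From mathcomp Require Import boolp classical_sets cardinality fsbigop.
Local Open Scope classical_set_scope.
Local Open Scope ring_scope.
Set Implicit Arguments. Unset Strict Implicit.
Import GRing.Theory.

Section Aux.
Variables (K : fieldType) (G : Type) (mul : G -> G -> G) (e : G)
    (inv : G -> G) (X : Type) (D : G -> set X) (h : G -> X -> X).
Hypothesis Hg : is_group mul e inv.
Hypothesis Hp : is_partial_action mul e inv D h.
Hypothesis Hf : pa_free e inv D h.
Local Notation R := (orbrel inv D h).

Lemma invK a : inv (inv a) = a.
Proof.
case: Hg => As M1 M1' MV MV'.
by rewrite -[LHS]M1' -(MV a) As MV M1.
Qed.

Lemma invM a b : inv (mul a b) = mul (inv b) (inv a).
Proof.
case: Hg => As M1 M1' MV MV'.
have H : mul (mul a b) (mul (inv b) (inv a)) = e.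
  by rewrite -As (As b) MV' M1 MV'.
by rewrite -[LHS]M1' -H As MV M1.
Qed.

Lemma inve : inv e = e.
Proof. case: Hg => As M1 M1' MV MV'. by rewrite -[LHS]M1 MV'. Qed.

Lemma hinv t x : D (inv t) x -> h (inv t) (h t x) = x.
Proof.
move=> Dx; rewrite (pa_comp Hp) //; first by rewrite (grp_mulV Hg) (pa_he Hp).
by rewrite invK (grp_mulV Hg); apply: (pa_De Hp).
Qed.

Lemma R_refl x : R x x.
Proof. exists e; rewrite ?inve; [exact: (pa_De Hp)| exact: (pa_he Hp)]. Qed.

Lemma R_sym x y : R x y -> R y x.
Proof.
case=> t Dx <-; exists (inv t); last exact: hinv.
by rewrite invK; apply: (pa_maps Hp).
Qed.

Lemma R_trans x y z : R x y -> R y z -> R x z.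
Proof.
case=> t Dx <- [s Dy <-].
have [_ H] : D (inv t) x /\ D (mul (inv t) (inv s)) x.
  apply/(pa_image Hp); exists (h t x); split => //.
  - by rewrite invK; apply: (pa_maps Hp).
  - exact: hinv.
exists (mul s t); first by rewrite invM.
by rewrite (pa_comp Hp).
Qed.

Lemma h_uniq s s' x : D (inv s) x -> D (inv s') x -> h s x = h s' x -> s = s'.
Proof.
move=> Ds Ds' E.
have [_ H] : D (inv s) x /\ D (mul (inv s) s') x.
  apply/(pa_image Hp); exists (h s x); split => //.
  - by rewrite invK; apply: (pa_maps Hp).
  - by rewrite E; apply: (pa_maps Hp).
  - exact: hinv.
have H2 : h (inv s') (h s x) = h (mul (inv s') s) x.
  by rewrite (pa_comp Hp) // invK.
rewrite E hinv // in H2.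
have H3 : mul (inv s') s = e.
  apply: (Hf (x := x)) => //; by rewrite invM invK.
case: Hg => As M1 M1' MV MV'.
by rewrite -[s]M1 -(MV' s') -As H3 M1'.
Qed.

Lemma gsum_zero (A : set G) (F : G -> K) :
  (forall s, A s -> F s = 0) -> gsum A F = 0.
Proof. by move=> H; rewrite /gsum fsbig1. Qed.

Lemma gsum_one (A : set G) (F : G -> K) s0 :
  A s0 -> (forall s, A s -> s <> s0 -> F s = 0) -> gsum A F = F s0.
Proof.
move=> As0 H; rewrite /gsum.
rewrite -(fsbig_widen ([set s0] : set {classic G})) ?fsbig_set1 //.
- by move=> s /= ->.
- by move=> s [As /= ns]; apply: H.
Qed.

Definition E (c : K) (x y : X) : X -> X -> K :=
  fun a b => if pselect (a = x /\ b = y) then c else 0.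

Definition voff (f : X -> X -> K) := forall a b, f a b != 0 -> R a b.

Lemma E_F0 c x y : R x y -> F0 R (E c x y).
Proof.
move=> Rxy; split.
  by move=> a b; rewrite /E; case: pselect => /= [[-> ->] _|_]; rewrite ?eqxx.
apply: (@sub_finite_set _ _ [set (x, y)]); last exact: finite_set1.
by move=> [a b] /=; rewrite /E; case: pselect => /= [[-> ->] _|_]; rewrite ?eqxx.
Qed.

Lemma conv_R f c y z : voff f -> R y z ->
  conv inv D h f (E c y z) = fun a b => if pselect (b = z) then f a y * c else 0.
Proof.
move=> vf Ryz; apply/funext => a; apply/funext => b; rewrite /conv.
case: pselect => Rab; case: pselect => bz.
- subst b; have [fay|fay] := eqVneq (f a y) 0.
    rewrite fay mul0r; apply: gsum_zero => s Ds; rewrite /E.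
    by case: pselect => /= [[-> _]|_]; rewrite ?fay ?mul0r ?mulr0.
  have [t Dt ht] := vf _ _ fay.
  rewrite (gsum_one (s0 := t)) //.
    by rewrite /E ht; case: pselect => /= [//|[]].
  move=> s Ds st; rewrite /E; case: pselect => /= [[hs _]|_]; last by rewrite mulr0.
  by exfalso; apply: st; apply: (h_uniq Ds Dt); by rewrite hs ht.
- apply: gsum_zero => s Ds; rewrite /E.
  by case: pselect => /= [[_ ?]|_]; [by []|rewrite mulr0].
- subst b; have [fay|fay] := eqVneq (f a y) 0; first by rewrite fay mul0r.
  by exfalso; apply: Rab; apply: R_trans (vf _ _ fay) Ryz.
- by [].
Qed.

Lemma conv_L f c x y : voff f -> R x y ->
  conv inv D h (E c x y) f = fun a b => if pselect (a = x) then c * f y b else 0.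
Proof.
move=> vf Rxy; apply/funext => a; apply/funext => b; rewrite /conv.
case: pselect => Rab; case: pselect => ax.
- subst a; have [t Dt ht] := Rxy.
  rewrite (gsum_one (s0 := t)) //.
    by rewrite /E ht; case: pselect => /= [//|[]].
  move=> s Ds st; rewrite /E; case: pselect => /= [[_ hs]|_]; last by rewrite mul0r.
  by exfalso; apply: st; apply: (h_uniq Ds Dt); by rewrite hs ht.
- apply: gsum_zero => s Ds; rewrite /E.
  by case: pselect => /= [[? _]|_]; [by []|rewrite mul0r].
- subst a; have [fyb|fyb] := eqVneq (f y b) 0; first by rewrite fyb mulr0.
  by exfalso; apply: Rab; apply: R_trans Rxy (vf _ _ fyb).
- by [].
Qed.

Ltac solveE := repeat match goal with |- context [pselect ?P] => destruct (pselect P) end;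
  repeat match goal with H : _ /\ _ |- _ => destruct H
                 | H : (_, _) = (_, _) |- _ => case: H => ? ? end;
  subst; rewrite ?mulr1 ?mul1r ?mulr0 ?mul0r ?addr0 ?add0r ?mulVf //; try (exfalso; firstorder).

Lemma vE' c x y : R x y -> voff (E c x y).
Proof. by move=> /(E_F0 c) []. Qed.

Ltac side := first [exact: R_refl | assumption
   | (match goal with H : forall f, _ f -> voff f |- voff _ => apply: H; eassumption end)
   | (apply: vE'; first [exact: R_refl | assumption]) | done].

Lemma E0 x y : E 0 x y = fun _ _ => 0.
Proof. by apply/funext => a; apply/funext => b; rewrite /E; case: pselect. Qed.

Lemma main_aux (I : set (X -> X -> K)) :
  is_ideal inv D h I ->
  exists Z : set X,
    R_invariant R Z /\
    (forall f : X -> X -> K,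
       I f <-> (F0 R f /\ (forall x y, f x y != 0 -> Z x /\ Z y))).
Proof.
case=> HF0 HI0 HIadd HIopp HIconv.
have vI f : I f -> voff f by move=> /HF0 [].
have vE c x y : R x y -> voff (E c x y) by move=> /(E_F0 c) [].
exists (fun x => I (E 1 x x)); split.
  move=> z x Zz Rzx /=.
  have Rxz := R_sym Rzx.
  have H1 : I (E 1 z x).
    have := (HIconv _ _ (E_F0 1 Rzx) Zz).2.
    rewrite conv_R; [| side ..].
    congr I; apply/funext => a; apply/funext => b; rewrite /E.
    solveE.
  have := (HIconv _ _ (E_F0 1 Rxz) H1).1.
  rewrite conv_R; [| side ..].
  congr I; apply/funext => a; apply/funext => b; rewrite /E.
  solveE.
move=> f; split.
  move=> If; split; first exact: HF0.
  move=> x y fxy; have Rxy := vI f If x y fxy; have Ryx := R_sym Rxy.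
  split.
    have Ig := (HIconv _ _ (E_F0 1 Ryx) If).2.
    have := (HIconv _ _ (E_F0 (f x y)^-1 (R_refl x)) Ig).1.
    rewrite conv_L; [| side ..].
    rewrite conv_R; [| side ..].
    congr I; apply/funext => a; apply/funext => b; rewrite /E.
    solveE.
  have Ig := (HIconv _ _ (E_F0 (f x y)^-1 Ryx) If).1.
  have := (HIconv _ _ (E_F0 1 (R_refl y)) Ig).2.
  rewrite conv_R; [| side ..].
  rewrite conv_L; [| side ..].
  congr I; apply/funext => a; apply/funext => b; rewrite /E.
  solveE.
case=> Ff Zf.
have [s Hs] : exists s : seq {classic (X * X)},
    [set p : {classic (X * X)} | f p.1 p.2 != 0] = [set` s].
  by apply/finite_seqP; case: Ff.
have Hin : forall a b, f a b != 0 -> ((a, b) : {classic (X * X)}) \in s.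
  move=> a b fab; have : [set` s] ((a, b) : {classic (X * X)}) by rewrite -Hs.
  by [].
elim: s {Hs} f Ff Zf Hin => [|p s IH] f Ff Zf Hin.
  have -> : f = fun _ _ => 0; last exact: HI0.
  apply/funext => a; apply/funext => b; apply/eqP; apply/negP => /negP fab.
  by have := Hin _ _ fab.
case: p => x y in Hin *.
pose g := fun a b => if pselect ((a, b) = (x, y)) then 0 else f a b.
have Ig : I g.
  apply: IH.
  - case: Ff => vf finf; split.
      move=> a b; rewrite /g; case: pselect => /= _; rewrite ?eqxx //; exact: vf.
    apply: sub_finite_set finf => -[a b] /=; rewrite /g.
    by case: pselect => /= _; rewrite ?eqxx.
  - move=> a b; rewrite /g; case: pselect => /= _; rewrite ?eqxx //; exact: Zf.
  - move=> a b; rewrite /g; case: pselect => /= nab; rewrite ?eqxx // => fab.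
    have := Hin _ _ fab; rewrite in_cons => /orP[/eqP E1|//].
    by exfalso; apply: nab; rewrite -E1.
have Ik : I (E (f x y) x y).
  have [fxy|fxy] := eqVneq (f x y) 0; first by rewrite fxy E0.
  have Rxy := (Ff.1 _ _ fxy).
  have := (HIconv _ _ (E_F0 (f x y) Rxy) (Zf _ _ fxy).1).2.
  rewrite conv_R; [| side ..].
  congr I; apply/funext => a; apply/funext => b; rewrite /E.
  solveE.
have := HIadd _ _ Ig Ik.
congr I; apply/funext => a; apply/funext => b; rewrite /g /E.
case: (pselect ((a, b) = (x, y))) => /= [E1|nab].
  by case: E1 => -> ->; case: pselect => /= [_|[]]; rewrite ?add0r.
case: pselect => /= [[ax bx]|_]; last by rewrite addr0.
by exfalso; apply: nab; rewrite ax bx.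
Qed.

End Aux.

Unset Implicit Arguments.

Theorem mainTheorem13 (K : fieldType) (G : Type) (mul : G -> G -> G) (e : G)
    (inv : G -> G) (X : Type) (D : G -> set X) (h : G -> X -> X)
    (I : set (X -> X -> K)) :
  is_group mul e inv ->
  is_partial_action mul e inv D h ->
  pa_free e inv D h ->
  is_ideal inv D h I ->
  exists Z : set X,
    R_invariant (orbrel inv D h) Z /\
    (forall f : X -> X -> K,
       I f <-> (F0 (orbrel inv D h) f /\
                (forall x y, f x y != 0 -> Z x /\ Z y))).
Proof. move=> Hg Hp Hf HI; exact: (main_aux Hg Hp Hf HI). Qed.
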